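(* Under the setting of the Jacobian formula ($\beta\in(0,1)$, $p\in(1,2]$, $\zeta>0$), the map $x\mapsto J(x)=-TB^\dagger K(x)B$ is Lipschitz continuous on $\mathbb{R}^n$ with respect to the Euclidean norm and the induced operator 2-norm: there exists $\xi\ge0$ with $\lVert J(x)-J(y)\rVert_2\le\xi\lVert x-y\rVert_2$ for all $x,y\in\mathbb{R}^n$.
   Context: $T=\beta D+D^{-1}L$ with $D$ the weighted degree matrix and $L=D-A$ the Laplacian of a simple connected weighted graph with $n$ vertices and $m\ge1$ edges; $B$ the incidence matrix, $B^\dagger$ its Moore–Penrose inverse; with $z=Bx$, $K(x)=\operatorname{diag}\big((z_i^2+\zeta)^{\frac12(p-2)}+(p-2)z_i^2(z_i^2+\zeta)^{\frac12(p-4)}\big)_{i=1}^m$. *)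

(* Defs.v *)
From HB Require Import structures.
From mathcomp Require Import all_boot all_order all_algebra.
From mathcomp Require Import all_classical all_reals all_analysis.
Set Implicit Arguments. Unset Strict Implicit. Unset Printing Implicit Defensive.
Import Order.TTheory GRing.Theory Num.Theory.
Local Open Scope ring_scope.
Local Open Scope classical_set_scope.

Section GraphDefs.
Variable R : realType.

(* A weighted graph on vertices 'I_n with edges 'I_m; edge e joins
   src e and tgt e (the orientation is arbitrary) with weight w e. *)
Variables (n m : nat) (src tgt : 'I_m -> 'I_n) (w : 'I_m -> R).

Definition edge_joins (e : 'I_m) (u v : 'I_n) : bool :=
  ((src e == u) && (tgt e == v)) || ((src e == v) && (tgt e == u)).

Definition simple_weighted_graph : Prop :=
  (forall e, src e != tgt e) /\
  (forall e1 e2, edge_joins e1 (src e2) (tgt e2) -> e1 = e2) /\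
  (forall e, 0 < w e).

Definition graph_rel : rel 'I_n := fun u v => [exists e, edge_joins e u v].

Definition graph_connected : Prop := forall u v, connect graph_rel u v.

Definition adjm : 'M[R]_n :=
  \matrix_(u, v) \sum_(e | edge_joins e u v) w e.
Definition degm : 'M[R]_n :=
  \matrix_(u, v) ((u == v)%:R * \sum_j adjm u j).
Definition laplm : 'M[R]_n := degm - adjm.

Definition incidm : 'M[R]_(m, n) :=
  \matrix_(e, u) ((src e == u)%:R - (tgt e == u)%:R).

Definition Tmat (beta : R) : 'M[R]_n := beta *: degm + invmx degm *m laplm.

Definition Kmat (p zeta : R) (x : 'cV[R]_n) : 'M[R]_m :=
  let z := incidm *m x in
  diag_mx (\row_i ((z i 0 ^+ 2 + zeta) `^ ((p - 2) / 2)
                   + (p - 2) * z i 0 ^+ 2 * (z i 0 ^+ 2 + zeta) `^ ((p - 4) / 2))).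

Definition Jmat (beta p zeta : R) (Bd : 'M[R]_(n, m)) (x : 'cV[R]_n) : 'M[R]_n :=
  - (Tmat beta *m Bd *m Kmat p zeta x *m incidm).

End GraphDefs.

(* Moore-Penrose inverse, characterized by the four Penrose equations
   (which determine it uniquely). *)
Definition is_pinv (R : realType) (k l : nat) (M : 'M[R]_(k, l)) (Md : 'M[R]_(l, k)) : Prop :=
  [/\ M *m Md *m M = M, Md *m M *m Md = Md,
      (M *m Md)^T = M *m Md & (Md *m M)^T = Md *m M].

Definition vnorm2 (R : realType) (k : nat) (v : 'cV[R]_k) : R :=
  Num.sqrt (\sum_i v i 0 ^+ 2).

Definition opnorm2 (R : realType) (k l : nat) (M : 'M[R]_(k, l)) : R :=
  sup [set vnorm2 (M *m v) | v in [set v : 'cV[R]_l | vnorm2 v <= 1]].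

(* Main.v *)
Require Import Defs.
From HB Require Import structures.
From mathcomp Require Import all_boot all_order all_algebra.
From mathcomp Require Import all_classical all_reals all_analysis.
From mathcomp Require Import ring lra.
Import Order.TTheory GRing.Theory Num.Theory.
Local Open Scope ring_scope.

Section Scalar.
Variable R : realType.

Lemma powR_posE (s r : R) : 0 < s -> s `^ r = expR (r * ln s).
Proof. by move=> s0; rewrite /powR gt_eqF. Qed.

Lemma powR_dec (a b r : R) : 0 < a -> a <= b -> r <= 0 -> b `^ r <= a `^ r.
Proof.
move=> a0 ab r0; have b0 : 0 < b by apply: lt_le_trans ab.
rewrite !powR_posE // ler_expR.
have : ln a <= ln b by rewrite ler_ln ?posrE.
nra.
Qed.

Lemma powR_gt0' (a r : R) : 0 < a -> 0 < a `^ r.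
Proof. by move=> a0; rewrite powR_posE // expR_gt0. Qed.

Lemma powR_key (s t r : R) : 0 < s -> s <= t -> r <= 0 ->
  s `^ r - t `^ r <= - r * s `^ r * ((t - s) / s).
Proof.
move=> s0 st r0; have t0 : 0 < t by apply: lt_le_trans st.
rewrite !powR_posE //.
set A := r * ln s; set B := r * ln t.
have -> : B = A + (B - A) by rewrite addrC subrK.
rewrite expRD.
have h1 := expR_ge1Dx (B - A).
have eA := expR_gt0 A.
have hl : ln (t / s) <= (t - s) / s.
  have -> : t / s = 1 + (t - s) / s by rewrite mulrBl divff ?gt_eqF // addrC subrK.
  apply: le_ln1Dx.
  have : 0 <= (t - s) / s by apply: divr_ge0; lra.
  lra.
have hd : ln (t / s) = ln t - ln s by rewrite ln_div ?posrE.
have hBA : B - A = r * ln (t / s) by rewrite hd /A /B; ring.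
have h2 : - r * ln (t / s) <= - r * ((t - s) / s) by apply: ler_wpM2l; lra.
have h3 : 1 - expR (B - A) <= - r * ((t - s) / s) by lra.
have := ler_wpM2l (ltW eA) h3.
move=> h4; rewrite mulrBr mulr1 in h4.
lra.
Qed.

Definition G (zeta r a : R) := (a ^+ 2 + zeta) `^ r.
Definition LG (zeta r : R) := zeta `^ r * (1 + - r * (1 + 2 / zeta)).

Lemma G_bounds (zeta r a : R) : 0 < zeta -> r <= 0 ->
  0 < G zeta r a <= zeta `^ r.
Proof.
move=> z0 r0; rewrite /G powR_gt0' /=; last by have := sqr_ge0 a; lra.
by apply: powR_dec => //; have := sqr_ge0 a; lra.
Qed.

Lemma G_one (zeta r a b : R) : 0 < zeta -> r <= 0 -> a ^+ 2 <= b ^+ 2 ->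
  G zeta r b <= G zeta r a /\ G zeta r a - G zeta r b <= LG zeta r * `|a - b|.
Proof.
move=> z0 r0 ab.
have za := sqr_ge0 a.
have hdec : G zeta r b <= G zeta r a by apply: powR_dec => //; lra.
split => //.
have [ga gz] := andP (G_bounds zeta r a z0 r0).
have [gb _] := andP (G_bounds zeta r b z0 r0).
have zr := powR_gt0' zeta r z0.
have K0 : 0 <= 2 / zeta by apply: divr_ge0; lra.
have Kr : 0 <= - r * (1 + 2 / zeta) by apply: mulr_ge0; lra.
rewrite /LG.
have n0 := normr_ge0 (a - b).
case: (lerP 1 `|a - b|) => hab.
  have : zeta `^ r * 1 <= zeta `^ r * (1 + - r * (1 + 2 / zeta)) by apply: ler_wpM2l; lra.
  have : zeta `^ r * (1 + - r * (1 + 2 / zeta)) * 1 <= zeta `^ r * (1 + - r * (1 + 2 / zeta)) * `|a - b|.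
    by apply: ler_wpM2l => //; apply: mulr_ge0; lra.
  lra.
have s0 : 0 < a ^+ 2 + zeta by lra.
have := @powR_key (a ^+ 2 + zeta) (b ^+ 2 + zeta) r s0 (_ : a ^+ 2 + zeta <= b ^+ 2 + zeta) r0.
rewrite -/(G zeta r a) -/(G zeta r b).
move=> /(_ ltac:(lra)) hk.
have e1 : b ^+ 2 + zeta - (a ^+ 2 + zeta) = (b - a) * (b + a) by ring.
rewrite e1 in hk.
have hba : (b - a) * (b + a) <= `|a - b| * (1 + 2 * `|a|).
  have : `|b + a| <= `|a - b| + 2 * `|a|.
    have -> : b + a = - (a - b) + 2 * a by ring.
    apply: le_trans (ler_normD _ _) _.
    by rewrite normrN normrM ger0_norm.
  have : (b - a) * (b + a) <= `|(b - a) * (b + a)| by apply: ler_norm.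
  rewrite normrM distrC.
  move=> h1 h2; apply: le_trans h1 _; apply: ler_wpM2l => //; lra.
have hK : 1 + 2 * `|a| <= (1 + 2 / zeta) * (a ^+ 2 + zeta).
  have hz : 2 / zeta * zeta = 2 by rewrite mulfVK ?gt_eqF.
  have ha : a ^+ 2 = `|a| ^+ 2 by rewrite real_normK ?num_real.
  have hz2 : 0 <= 2 / zeta * a ^+ 2 by apply: mulr_ge0.
  have := sqr_ge0 (`|a| - 1).
  have -> : (1 + 2 / zeta) * (a ^+ 2 + zeta) = a ^+ 2 + zeta + 2 / zeta * a ^+ 2 + 2 / zeta * zeta by ring.
  rewrite hz ha; nra.
have hq : (b - a) * (b + a) / (a ^+ 2 + zeta) <= `|a - b| * (1 + 2 / zeta).
  rewrite ler_pdivrMr //.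
  apply: le_trans hba _.
  rewrite -mulrA; apply: ler_wpM2l => //.
have hGa : G zeta r a <= zeta `^ r := gz.
have e2 : - r * G zeta r a * ((b - a) * (b + a) / (a ^+ 2 + zeta)) <=
          - r * zeta `^ r * (`|a - b| * (1 + 2 / zeta)).
  have rr : 0 <= - r by lra.
  have q0 : 0 <= (b - a) * (b + a) / (a ^+ 2 + zeta).
    apply: divr_ge0; last lra.
    have -> : (b - a) * (b + a) = b ^+ 2 - a ^+ 2 by ring.
    lra.
  rewrite -!mulrA; apply: ler_wpM2l => //.
  apply: le_trans (_ : G zeta r a * (`|a - b| * (1 + 2 / zeta)) <= _).
    by apply: ler_wpM2l => //; lra.
  by apply: ler_wpM2r => //; apply: mulr_ge0 => //; lra.
have : - r * zeta `^ r * (`|a - b| * (1 + 2 / zeta)) + zeta `^ r * `|a - b|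
   = zeta `^ r * (1 + - r * (1 + 2 / zeta)) * `|a - b| by ring.
have : 0 <= zeta `^ r * `|a - b| by apply: mulr_ge0 => //; lra.
lra.
Qed.

Lemma G_lip (zeta r a b : R) : 0 < zeta -> r <= 0 ->
  `|G zeta r a - G zeta r b| <= LG zeta r * `|a - b|.
Proof.
move=> z0 r0.
case: (lerP (a ^+ 2) (b ^+ 2)) => h.
  have [h1 h2] := G_one zeta r a b z0 r0 h.
  by rewrite ger0_norm //; lra.
have [h1 h2] := G_one zeta r b a z0 r0 (ltW h).
rewrite ler0_norm; last lra.
by rewrite distrC; lra.
Qed.

Definition F (p zeta a : R) :=
  (a ^+ 2 + zeta) `^ ((p - 2) / 2)
  + (p - 2) * a ^+ 2 * (a ^+ 2 + zeta) `^ ((p - 4) / 2).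

Lemma F_decomp (p zeta a : R) : 0 < zeta ->
  F p zeta a = (p - 1) * G zeta ((p - 2) / 2) a - (p - 2) * zeta * G zeta ((p - 4) / 2) a.
Proof.
move=> z0; rewrite /F /G.
have s0 : 0 < a ^+ 2 + zeta by have := sqr_ge0 a; lra.
have -> : (p - 2) / 2 = (p - 4) / 2 + 1 by field.
rewrite powRD; last by apply/implyP => _; rewrite gt_eqF.
rewrite powRr1; last lra.
ring.
Qed.

Definition LF (p zeta : R) :=
  `|p - 1| * LG zeta ((p - 2) / 2) + `|p - 2| * zeta * LG zeta ((p - 4) / 2).

Lemma F_lip (p zeta a b : R) : 0 < zeta -> p <= 2 ->
  `|F p zeta a - F p zeta b| <= LF p zeta * `|a - b|.
Proof.
move=> z0 p2; rewrite !F_decomp //.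
have r1 : (p - 2) / 2 <= 0 by rewrite ler_pdivrMr //; lra.
have r2 : (p - 4) / 2 <= 0 by rewrite ler_pdivrMr //; lra.
have h1 := G_lip zeta ((p - 2) / 2) a b z0 r1.
have h2 := G_lip zeta ((p - 4) / 2) a b z0 r2.
set g1 := G zeta _ a in h1 *; set g2 := G zeta _ b in h1 *.
set k1 := G zeta _ a in h2 *; set k2 := G zeta _ b in h2 *.
have -> : (p - 1) * g1 - (p - 2) * zeta * k1 - ((p - 1) * g2 - (p - 2) * zeta * k2)
  = (p - 1) * (g1 - g2) - (p - 2) * zeta * (k1 - k2) by ring.
apply: le_trans (ler_normB _ _) _.
rewrite !normrM (ger0_norm (ltW z0)) /LF mulrDl.
apply: lerD.
  by rewrite -[X in _ <= X]mulrA; apply: ler_wpM2l.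
by rewrite -[X in _ <= X]mulrA; apply: ler_wpM2l => //; apply: mulr_ge0 => //; lra.
Qed.

End Scalar.
Arguments F {R}. Arguments LF {R}. Arguments F_lip {R}. Arguments G {R}. Arguments LG {R}.

Set Implicit Arguments. Unset Strict Implicit.
Section Mat.
Variable R : realType.

Lemma vnorm2_ge0 k (u : 'cV[R]_k) : 0 <= vnorm2 u.
Proof. exact: sqrtr_ge0. Qed.

Lemma vnorm2_coord k (u : 'cV[R]_k) i : `|u i 0| <= vnorm2 u.
Proof.
rewrite /vnorm2 -sqrtr_sqr; apply: ler_wsqrtr.
rewrite (bigD1 i) //= lerDl; apply: sumr_ge0 => j _; exact: sqr_ge0.
Qed.

Lemma sum_abs_ge k (u : 'cV[R]_k) i : `|u i 0| <= \sum_j `|u j 0|.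
Proof.
rewrite (bigD1 i) //= lerDl; apply: sumr_ge0 => j _; exact: normr_ge0.
Qed.

Lemma vnorm2_le_sum k (u : 'cV[R]_k) : vnorm2 u <= \sum_j `|u j 0|.
Proof.
have S0 : 0 <= \sum_j `|u j 0| by apply: sumr_ge0 => j _; exact: normr_ge0.
rewrite /vnorm2 -(ger0_norm S0) -sqrtr_sqr; apply: ler_wsqrtr.
rewrite expr2 big_distrl /=; apply: ler_sum => j _.
rewrite -real_normK ?num_real // expr2; apply: ler_wpM2l => //.
exact: sum_abs_ge.
Qed.

Definition NM k l (M : 'M[R]_(k, l)) := \sum_i \sum_j `|M i j|.

Lemma NM_ge0 k l (M : 'M[R]_(k, l)) : 0 <= NM M.
Proof. by apply: sumr_ge0 => i _; apply: sumr_ge0 => j _; exact: normr_ge0. Qed.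

Lemma coord_mul k l (M : 'M[R]_(k, l)) v i :
  `|(M *m v) i 0| <= (\sum_j `|M i j|) * vnorm2 v.
Proof.
rewrite mxE big_distrl /=; apply: le_trans (ler_norm_sum _ _ _) _.
apply: ler_sum => j _; rewrite normrM; apply: ler_wpM2l => //.
exact: vnorm2_coord.
Qed.

Lemma vnorm2_mul k l (M : 'M[R]_(k, l)) v : vnorm2 (M *m v) <= NM M * vnorm2 v.
Proof.
apply: le_trans (vnorm2_le_sum _) _.
rewrite /NM big_distrl /=; apply: ler_sum => i _; exact: coord_mul.
Qed.

Lemma vnorm2N k (u : 'cV[R]_k) : vnorm2 (- u) = vnorm2 u.
Proof. by rewrite /vnorm2; congr Num.sqrt; apply: eq_bigr => i _; rewrite mxE sqrrN. Qed.

Lemma vnorm20 k : vnorm2 (0 : 'cV[R]_k) = 0.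
Proof.
rewrite /vnorm2 big1 ?sqrtr0 // => i _; by rewrite mxE expr0n.
Qed.

End Mat.
Unset Implicit Arguments.

Lemma row_le_NM (R : realType) k l (M : 'M[R]_(k, l)) i : \sum_j `|M i j| <= NM M.
Proof.
rewrite /NM (bigD1 i) //= lerDl; apply: sumr_ge0 => i' _; apply: sumr_ge0 => j _; exact: normr_ge0.
Qed.

Theorem mainTheorem11 (R : realType) (n m : nat)
  (src tgt : 'I_m -> 'I_n) (w : 'I_m -> R) (beta p zeta : R)
  (Bd : 'M[R]_(n, m)) :
  (0 < m)%N ->
  simple_weighted_graph src tgt w ->
  graph_connected src tgt ->
  0 < beta < 1 -> 1 < p <= 2 -> 0 < zeta ->
  is_pinv (incidm R src tgt) Bd ->
  exists xi : R, 0 <= xi /\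
    forall x y : 'cV[R]_n,
      opnorm2 (Jmat src tgt w beta p zeta Bd x - Jmat src tgt w beta p zeta Bd y)
        <= xi * vnorm2 (x - y).
Proof.
move=> _ _ _ _ /andP[p1 p2] z0 _.
set B := incidm R src tgt.
set A := Tmat src tgt w beta *m Bd.
have LF0 : 0 <= LF p zeta.
  have := F_lip p zeta 1 0 z0 p2; rewrite subr0 normr1 mulr1.
  move=> h; exact: le_trans (normr_ge0 _) h.
pose C := LF p zeta * NM B * NM B.
have C0 : 0 <= C by rewrite /C; apply: mulr_ge0; [apply: mulr_ge0|]; rewrite ?NM_ge0.
exists (NM A * \sum_(i < m) C); split.
  by apply: mulr_ge0; [apply: NM_ge0 | apply: sumr_ge0].
move=> x y; rewrite /opnorm2; apply: ge_sup.
  exists (vnorm2 ((Jmat src tgt w beta p zeta Bd x - Jmat src tgt w beta p zeta Bd y) *m 0)).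
  by exists 0 => //=; rewrite vnorm20 ler01.
move=> _ [v /= hv <-].
pose dF := \row_i (F p zeta ((B *m x) i 0) - F p zeta ((B *m y) i 0)).
have eK : Kmat src tgt p zeta x - Kmat src tgt p zeta y = diag_mx dF.
  apply/matrixP => i j; rewrite !mxE /F -mulrnBl //.
have eJ : (Jmat src tgt w beta p zeta Bd x - Jmat src tgt w beta p zeta Bd y) *m v
   = - (A *m (diag_mx dF *m (B *m v))).
  rewrite -eK /Jmat /A /B.
  move: (Kmat src tgt p zeta x) (Kmat src tgt p zeta y) (Tmat src tgt w beta) (incidm R src tgt) => K1 K2 T B'.
  rewrite !mulmxBl mulmxBr !mulNmx !mulmxA.
  by rewrite opprD.
rewrite eJ vnorm2N.
set d := vnorm2 (x - y).
have d0 : 0 <= d by apply: vnorm2_ge0.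
apply: le_trans (vnorm2_mul _ _) _.
rewrite -mulrA; apply: ler_wpM2l; first exact: NM_ge0.
apply: le_trans (vnorm2_le_sum _) _.
rewrite big_distrl /=; apply: ler_sum => i _.
rewrite mul_diag_mx mxE [dF 0 i]mxE normrM.
have hw : `|(B *m v) i 0| <= NM B.
  apply: le_trans (vnorm2_coord _ _) _.
  apply: le_trans (vnorm2_mul _ _) _.
  have := NM_ge0 B; nra.
have hz : `|(B *m x) i 0 - (B *m y) i 0| <= NM B * d.
  have -> : (B *m x) i 0 - (B *m y) i 0 = (B *m (x - y)) i 0 by rewrite mulmxBr !mxE.
  apply: le_trans (coord_mul _ _ _) _.
  apply: ler_wpM2r => //; exact: row_le_NM.
have hf := F_lip p zeta ((B *m x) i 0) ((B *m y) i 0) z0 p2.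
have : LF p zeta * `|(B *m x) i 0 - (B *m y) i 0| <= LF p zeta * (NM B * d).
  by apply: ler_wpM2l.
move=> h2.
have : `|F p zeta ((B *m x) i 0) - F p zeta ((B *m y) i 0)| * `|(B *m v) i 0|
   <= LF p zeta * (NM B * d) * NM B.
  apply: ler_pM => //; exact: le_trans hf h2.
move=> h3; apply: le_trans h3 _.
by rewrite /C le_eqVlt; apply/orP; left; apply/eqP; ring.
Qed.
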